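(* Let $M$ be an $n$-quasi-paving matroid of rank $n$ on $[d]$. Then $M$ is realizable over $\mathbb{C}$, and its matroid variety $V_M\subseteq\mathbb{C}^{nd}$ is irreducible.
   Context: Quasi-paving construction: given a positive integer $n\le d$ and a collection $\mathcal{H}=\{H_1,\ldots,H_k\}$ of subsets of $[d]$ any three of which have empty intersection, the $n$-quasi-paving matroid with representation $\mathcal{H}$ is the matroid on $[d]$ whose circuits are: (Type 1) the $(n-1)$-element subsets contained in the intersection of two distinct members of $\mathcal{H}$; (Type 2) the $n$-element subsets of some $H_i$ containing no Type 1 set; (Type 3) the $(n+1)$-element subsets containing no Type 1 or Type 2 set. A realization of a rank-$n$ matroid $M$ on $[d]$ is a tuple $(\gamma_1,\ldots,\gamma_d)$ of vectors in $\mathbb{C}^n$ (identified with a point of $\mathbb{C}^{nd}$) such that a set $\{i_1,\ldots,i_p\}$ is dependent in $M$ iff $\gamma_{i_1},\ldots,\gamma_{i_p}$ are linearly dependent; $\Gamma_M$ is the set of realizations and the matroid variety $V_M$ is its Zariski closure in $\mathbb{C}^{nd}$. $M$ is realizable if $\Gamma_M\neq\emptyset$. *)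

(* Defs.v *)
From mathcomp Require Import all_boot all_algebra.
From mathcomp Require Import Rstruct complex mpoly.
Set Implicit Arguments. Unset Strict Implicit. Unset Printing Implicit Defensive.
Import GRing.Theory.
Local Open Scope ring_scope.

Definition C : numClosedFieldType := complex Rdefinitions.R.

Section QuasiPaving.
Variables (d n : nat) (H : {set {set 'I_d}}).

Definition triple_empty : Prop :=
  forall A B D, A \in H -> B \in H -> D \in H ->
    A != B -> B != D -> A != D -> A :&: B :&: D = set0.

Definition qp_type1 (S : {set 'I_d}) : Prop :=
  #|S| = (n - 1)%N /\
  exists A B, [/\ A \in H, B \in H, A != B & S \subset A :&: B].

Definition qp_type2 (S : {set 'I_d}) : Prop :=
  #|S| = n /\ (exists A, A \in H /\ S \subset A) /\
  ~ (exists T : {set 'I_d}, T \subset S /\ qp_type1 T).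

Definition qp_type3 (S : {set 'I_d}) : Prop :=
  #|S| = n.+1 /\ ~ (exists T : {set 'I_d}, T \subset S /\ (qp_type1 T \/ qp_type2 T)).

Definition qp_circuit (S : {set 'I_d}) : Prop :=
  qp_type1 S \/ qp_type2 S \/ qp_type3 S.

Definition qp_dependent (S : {set 'I_d}) : Prop :=
  exists T : {set 'I_d}, T \subset S /\ qp_circuit T.

Definition qp_independent (S : {set 'I_d}) : Prop := ~ qp_dependent S.

Definition qp_has_rank (r : nat) : Prop :=
  (exists S, qp_independent S /\ #|S| = r) /\
  (forall S, qp_independent S -> (#|S| <= r)%N).

(* A point x of C^(n d) is identified with the n x d matrix whose j-th column
   is gamma_j (via vec_mx); a realization is such a point whose column
   vectors have exactly the dependencies of the matroid. *)
Definition point_mx (x : 'I_(n * d) -> C) : 'M[C]_(n, d) := vec_mx (\row_k x k).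

Definition cols_dependent (A : 'M[C]_(n, d)) (S : {set 'I_d}) : Prop :=
  exists c : 'I_d -> C,
    (exists j, j \in S /\ c j != 0) /\ \sum_(j in S) c j *: col j A = 0.

Definition qp_realization (x : 'I_(n * d) -> C) : Prop :=
  forall S : {set 'I_d}, qp_dependent S <-> cols_dependent (point_mx x) S.

End QuasiPaving.

Section Zariski.
Variable m : nat.

Definition zero_locus (P : {mpoly C[m]} -> Prop) : ('I_m -> C) -> Prop :=
  fun x => forall p, P p -> p.@[x] = 0.

Definition vanishing_ideal (V : ('I_m -> C) -> Prop) : {mpoly C[m]} -> Prop :=
  fun p => forall x, V x -> p.@[x] = 0.

Definition zariski_closure (V : ('I_m -> C) -> Prop) : ('I_m -> C) -> Prop :=
  zero_locus (vanishing_ideal V).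

Definition zariski_closed (V : ('I_m -> C) -> Prop) : Prop :=
  exists P, forall x, V x <-> zero_locus P x.

Definition zariski_irreducible (V : ('I_m -> C) -> Prop) : Prop :=
  (exists x, V x) /\
  forall Z1 Z2, zariski_closed Z1 -> zariski_closed Z2 ->
    (forall x, V x -> Z1 x \/ Z2 x) ->
    (forall x, V x -> Z1 x) \/ (forall x, V x -> Z2 x).

End Zariski.

(* Main.v *)
Require Import Defs.
From mathcomp Require Import all_boot all_algebra.
From mathcomp Require Import Rstruct complex mpoly zify.
From Stdlib Require Import FunctionalExtensionality Classical ClassicalEpsilon.
Set Implicit Arguments. Unset Strict Implicit. Unset Printing Implicit Defensive.
Import GRing.Theory Num.Theory.
Local Open Scope ring_scope.

Lemma poly_nonroot (P : {poly C}) : P != 0 -> exists z, P.[z] != 0.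
Proof.
move=> P0.
pose rs := [seq (i%:R : C) | i <- iota 0 (size P)].
case: (boolP (has (fun z => P.[z] != 0) rs)) => [/hasP[z _ hz]|hn]; first by exists z.
exfalso.
have hall : all (root P) rs.
  apply/allP => z zr; apply/negPn; apply: contra hn => hz; apply/hasP; by exists z.
have hu : uniq rs.
  rewrite map_inj_uniq ?iota_uniq // => i j /eqP; rewrite eqr_nat => /eqP.
  done.
have := max_poly_roots P0 hall hu.
by rewrite size_map size_iota ltnn.
Qed.

Section PolyFun.
Variable PI : Type.
Definition polyfun (phi : (PI -> C) -> C) :=
  forall a b : PI -> C, exists P : {poly C}, forall z, phi (fun k => a k + z * b k) = P.[z].

Lemma polyfunM phi psi : polyfun phi -> polyfun psi -> polyfun (fun t => phi t * psi t).
Proof.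
move=> h1 h2 a b; have [P hP] := h1 a b; have [Q hQ] := h2 a b.
by exists (P * Q) => z; rewrite hornerM hP hQ.
Qed.

Lemma polyfun1 : polyfun (fun _ => 1).
Proof. by move=> a b; exists 1 => z; rewrite hornerC. Qed.

Lemma polyfun_two phi psi t1 t2 : polyfun phi -> polyfun psi ->
  phi t1 != 0 -> psi t2 != 0 -> exists t, phi t * psi t != 0.
Proof.
move=> h1 h2 n1 n2.
have [P hP] := h1 t1 (fun k => t2 k - t1 k).
have [Q hQ] := h2 t1 (fun k => t2 k - t1 k).
have e0 : (fun k => t1 k + 0 * (t2 k - t1 k)) = t1.
  by apply: functional_extensionality => k; rewrite mul0r addr0.
have e1 : (fun k => t1 k + 1 * (t2 k - t1 k)) = t2.
  by apply: functional_extensionality => k; rewrite mul1r addrC subrK.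
have P0 : P != 0.
  apply: contraNneq n1 => eP; by rewrite -e0 hP eP horner0.
have Q0 : Q != 0.
  apply: contraNneq n2 => eQ; by rewrite -e1 hQ eQ horner0.
have [z hz] := poly_nonroot (mulf_neq0 P0 Q0).
exists (fun k => t1 k + z * (t2 k - t1 k)).
by rewrite hP hQ -hornerM.
Qed.

Lemma polyfun_common (I : finType) (phi : I -> (PI -> C) -> C) (t0 : PI -> C) :
  (forall i, polyfun (phi i)) -> (forall i, exists t, phi i t != 0) ->
  exists t, forall i, phi i t != 0.
Proof.
move=> hp hn.
have key : forall r : seq I, polyfun (fun t => \prod_(i <- r) phi i t) /\
   exists t, \prod_(i <- r) phi i t != 0.
  elim=> [|i r [IHp [tr IHt]]].
    split; first by move=> a b; exists 1 => z; rewrite big_nil hornerC.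
    by exists t0; rewrite big_nil oner_neq0.
  have hpp : polyfun (fun t => \prod_(j <- i :: r) phi j t).
    move=> a b; have [P hP] := polyfunM (hp i) IHp a b.
    by exists P => z; rewrite big_cons hP.
  split => //.
  have [ti hti] := hn i.
  have [t ht] := polyfun_two (hp i) IHp hti IHt.
  by exists t; rewrite big_cons.
have [_ [t ht]] := key (enum I).
exists t => i; move: ht; rewrite big_enum /=.
rewrite (bigD1 i) //= mulf_eq0 negb_or => /andP[]//.
Qed.
End PolyFun.

Section Param.
Variables (d n : nat) (H : {set {set 'I_d}}).

Definition PI : Type :=
  (({set 'I_d} * 'I_n) + ('I_d * 'I_n) + ('I_d * 'I_n) + ('I_d * ('I_n * 'I_2)))%type.

Section Ring.
Variable R : comRingType.
Implicit Types t : PI -> R.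

Definition nu t (A : {set 'I_d}) : 'rV[R]_n := \row_i t (inl (inl (inl (A, i)))).
Definition uu t (j : 'I_d) : 'cV[R]_n := \col_i t (inl (inl (inr (j, i)))).
Definition mm t (j : 'I_d) : 'cV[R]_n := \col_i t (inl (inr (j, i))).
Definition MM t (j : 'I_d) : 'M[R]_(n, 2) := \matrix_(i, k) t (inr (j, (i, k))).

Definition P1 (v : 'rV[R]_n) (m u : 'cV[R]_n) : 'cV[R]_n :=
  (v *m m) 0 0 *: u - (v *m u) 0 0 *: m.
Definition P2 (N : 'M[R]_(2, n)) (M : 'M[R]_(n, 2)) (u : 'cV[R]_n) : 'cV[R]_n :=
  \det (N *m M) *: u - M *m (\adj (N *m M) *m (N *m u)).

Definition hs (j : 'I_d) : seq {set 'I_d} := filter (fun A : {set 'I_d} => j \in A) (enum H).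

Definition gam t (j : 'I_d) : 'cV[R]_n :=
  match hs j with
  | [::] => uu t j
  | [:: A] => P1 (nu t A) (mm t j) (uu t j)
  | A :: B :: _ => P2 (col_mx (nu t A) (nu t B)) (MM t j) (uu t j)
  end.

Definition GM t : 'M[R]_(n, d) := \matrix_(i, j) gam t j i 0.

Lemma P1_orth v m u : v *m P1 v m u = 0.
Proof.
rewrite /P1 mulmxBr -!scalemxAr; apply/rowP => k; rewrite !mxE ord1.
by rewrite mulrC subrr.
Qed.

Lemma P2_orth N M u : N *m P2 N M u = 0.
Proof.
rewrite /P2 mulmxBr -scalemxAr !mulmxA mul_mx_adj mul_scalar_mx.
by rewrite -scalemxAl subrr.
Qed.
End Ring.

Section Morph.
Variables (R S : comRingType) (g : {rmorphism R -> S}).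

Lemma map_P1 v m u : map_mx g (P1 v m u) = P1 (map_mx g v) (map_mx g m) (map_mx g u).
Proof. by rewrite /P1 map_mxB !map_mxZ -!map_mxM !mxE. Qed.

Lemma map_P2 N M u : map_mx g (P2 N M u) = P2 (map_mx g N) (map_mx g M) (map_mx g u).
Proof. by rewrite /P2 map_mxB map_mxZ !map_mxM -det_map_mx map_mx_adj map_mxM. Qed.

Lemma map_gam t j : map_mx g (gam t j) = gam (g \o t) j.
Proof.
have en A : map_mx g (nu t A) = nu (g \o t) A by apply/rowP => i; rewrite !mxE.
have eu : map_mx g (uu t j) = uu (g \o t) j by apply/colP => i; rewrite !mxE.
have em : map_mx g (mm t j) = mm (g \o t) j by apply/colP => i; rewrite !mxE.
have eM : map_mx g (MM t j) = MM (g \o t) j by apply/matrixP => i k; rewrite !mxE.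
rewrite /gam; case: (hs j) => [|A [|B l]] //.
  by rewrite map_P1 en eu em.
rewrite map_P2 eu eM; congr P2; apply/matrixP => i k; rewrite !mxE.
by case: splitP => ? _; rewrite !mxE.
Qed.

Lemma map_GM t : map_mx g (GM t) = GM (g \o t).
Proof.
apply/matrixP => i j; rewrite !mxE -map_gam.
by rewrite mxE.
Qed.
End Morph.
End Param.

Section LinAlg.
Variables (d n : nat).
Implicit Types (G : 'M[C]_(n, d)) (S T : {set 'I_d}).

Definition Ysub (R : Type) (G : 'M[R]_(n, d)) S : 'M[R]_(#|S|, n) :=
  \matrix_(l, i) G i (enum_val l).

Definition gr G j : 'rV[C]_n := (col j G)^T.

Lemma row_Ysub G S l : row l (Ysub G S) = gr G (enum_val l).
Proof. by apply/rowP => i; rewrite !mxE. Qed.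

Lemma Ysub_vec G S (v : 'rV[C]_#|S|) :
  (v *m Ysub G S)^T = \sum_(l < #|S|) v 0 l *: col (enum_val l) G.
Proof.
apply/colP => i; rewrite !mxE summxE; apply: eq_bigr => l _.
by rewrite !mxE.
Qed.

Lemma cols_depP G S : cols_dependent G S <-> ~~ row_free (Ysub G S).
Proof.
split.
  move=> [c [[j [jS cj]] hs]].
  pose v : 'rV[C]_#|S| := \row_l c (enum_val l).
  have vY : v *m Ysub G S = 0.
    apply: trmx_inj; rewrite Ysub_vec trmx0 -[RHS]hs (big_enum_val (fun x => c x *: col x G)).
    by apply: eq_bigr => l _; rewrite mxE.
  apply/negP => /row_free_inj fr.
  have v0 : v = 0 by apply: fr; rewrite /= vY mul0mx.
  move: cj; have := congr1 (fun w : 'rV_#|S| => w 0 (enum_rank_in jS j)) v0.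
  by rewrite !mxE enum_rankK_in // => ->; rewrite eqxx.
move=> nf.
have : kermx (Ysub G S) != 0 by rewrite kermx_eq0.
case/rowV0Pn => v /sub_kermxP vY /rV0Pn [l0 vl0].
pose c j := v 0 (enum_rank_in (enum_valP l0) j).
exists c; split.
  exists (enum_val l0); split; first exact: enum_valP.
  by rewrite /c enum_valK_in.
rewrite (big_enum_val (fun x => c x *: col x G)) /=.
rewrite -[RHS](trmx0) -vY Ysub_vec; apply: eq_bigr => l _.
by rewrite /c enum_valK_in.
Qed.


Lemma Ysub_tr_mul G S p (K : 'M[C]_(p, n)) :
  (forall j, j \in S -> K *m col j G = 0) -> K *m (Ysub G S)^T = 0.
Proof.
move=> hK; apply/matrixP => a l; rewrite !mxE.
have := congr1 (fun M : 'M_(p, 1) => M a 0) (hK _ (enum_valP l)).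
rewrite !mxE => e; rewrite -[RHS]e; apply: eq_bigr => i _; by rewrite !mxE.
Qed.

Lemma rank_orth G S p (K : 'M[C]_(p, n)) :
  (forall j, j \in S -> K *m col j G = 0) -> (\rank (Ysub G S) + \rank K <= n)%N.
Proof.
move=> /Ysub_tr_mul /sub_kermxP /mxrankS; rewrite mxrank_ker mxrank_tr => h.
have := rank_leq_col (Ysub G S); lia.
Qed.

Lemma row_free_det G S (P : 'M[C]_(n, #|S|)) :
  \det (Ysub G S *m P) != 0 -> row_free (Ysub G S).
Proof.
move=> h; have : row_free (Ysub G S *m P) by rewrite row_free_unit unitmxE unitfE.
rewrite /row_free => /eqP e; rewrite eqn_leq rank_leq_row /= -{1}e.
exact: mxrankM_maxl.
Qed.

Lemma gr_sub G S j : j \in S -> (gr G j <= Ysub G S)%MS.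
Proof.
move=> jS; rewrite -(enum_rankK_in jS jS) -row_Ysub; exact: row_sub.
Qed.

Lemma Ysub_subP G S m (W : 'M[C]_(m, n)) :
  reflect (forall j, j \in S -> (gr G j <= W)%MS) (Ysub G S <= W)%MS.
Proof.
apply: (iffP idP).
  by move=> h j jS; apply: submx_trans h; apply: gr_sub.
by move=> h; apply/row_subP => l; rewrite row_Ysub; apply: h; apply: enum_valP.
Qed.

Lemma Ysub_mono G S T : S \subset T -> (Ysub G S <= Ysub G T)%MS.
Proof.
move=> /subsetP sST; apply/Ysub_subP => j jS; apply: gr_sub; exact: sST.
Qed.

Lemma gr_zero_not_free G S j : j \in S -> gr G j = 0 -> ~~ row_free (Ysub G S).
Proof.
move=> jS g0; apply/negP => /row_free_inj fr.
have : row (enum_rank_in jS j) (Ysub G S) = 0 by rewrite row_Ysub enum_rankK_in.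
rewrite rowE -(mul0mx _ (Ysub G S)).
move/fr => /(congr1 (fun M : 'rV_#|S| => M 0 (enum_rank_in jS j))).
by rewrite !mxE !eqxx /= => /eqP; rewrite oner_eq0.
Qed.

Lemma rank_rV1 (v : 'rV[C]_n) : v != 0 -> \rank v = 1%N.
Proof. by move=> v0; rewrite rank_rV v0. Qed.

Lemma extract G T : exists S, [/\ S \subset T, row_free (Ysub G S) &
  (Ysub G T <= Ysub G S)%MS].
Proof.
suff key : forall s : seq 'I_d, exists S, [/\ S \subset [set x in s], row_free (Ysub G S) &
  forall j, j \in s -> (gr G j <= Ysub G S)%MS].
  have [S [sS fS hS]] := key (enum T).
  exists S; split => //.
    by apply: subset_trans sS _; apply/subsetP => x; rewrite inE mem_enum.
  by apply/Ysub_subP => j jT; apply: hS; rewrite mem_enum.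
elim=> [|j s [S [sS fS hS]]].
  exists set0; split => //; try exact: sub0set.
  rewrite /row_free eqn_leq rank_leq_row /=; move: (\rank _) => r; by rewrite cards0.
have sS' : S \subset [set x in j :: s].
  apply: subset_trans sS _; apply/subsetP => x; rewrite !inE => ->; exact: orbT.
case: (boolP (gr G j <= Ysub G S)%MS) => hj.
  exists S; split => // i; rewrite inE => /orP[/eqP ->|]//; exact: hS.
have jS : j \notin S by apply: contra hj; apply: gr_sub.
have gj0 : gr G j != 0 by apply: contra hj => /eqP ->; exact: sub0mx.
exists (j |: S); split.
- by rewrite subUset sS' andbT sub1set !inE eqxx.
- have e : (Ysub G (j |: S) :=: gr G j + Ysub G S)%MS.
    apply/eqmxP/andP; split.
      apply/Ysub_subP => i; rewrite !inE => /orP[/eqP ->|iS].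
        exact: addsmxSl.
      apply: submx_trans (addsmxSr _ _); exact: gr_sub.
    rewrite addsmx_sub gr_sub ?setU11 //=; apply: Ysub_mono; exact: subsetUr.
  rewrite /row_free e mxrank_disjoint_sum.
    by rewrite rank_rV1 // (eqP fS) cardsU1 jS.
  apply/eqP; rewrite -submx0; apply: contraR hj => hc.
  have r1 : \rank (gr G j :&: Ysub G S)%MS = 1%N.
    apply/eqP; rewrite eqn_leq lt0n mxrank_eq0 -submx0 hc andbT.
    by rewrite (leq_trans (mxrankS (capmxSl _ _))) // rank_leq_row.
  have : (gr G j <= gr G j :&: Ysub G S)%MS.
    by rewrite -(mxrank_leqif_sup (capmxSl _ _)) r1 rank_rV1.
  by move/submx_trans; apply; exact: capmxSr.
- move=> i; rewrite inE => /orP[/eqP ->|iS].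
    by apply: gr_sub; rewrite setU11.
  apply: submx_trans (hS _ iS) _; apply: Ysub_mono; exact: subsetUr.
Qed.

End LinAlg.

Section Choice.
Variable n : nat.
Implicit Types (a b v w x y : 'rV[C]_n).

Lemma submxB m (A B : 'M[C]_(m, n)) p (W : 'M[C]_(p, n)) :
  (A <= W)%MS -> (B <= W)%MS -> (A - B <= W)%MS.
Proof. by move=> hA hB; apply: addmx_sub => //; rewrite -scaleN1r scalemx_sub. Qed.

Lemma rV_sub_sym a b : a != 0 -> b != 0 -> (b <= a)%MS -> (a <= b)%MS.
Proof.
move=> a0 b0 ba; rewrite -(mxrank_leqif_sup ba).
by rewrite !rank_rV a0 b0.
Qed.

Lemma pair_free a b : a != 0 -> b != 0 -> ~~ (a <= b)%MS -> row_free (col_mx a b).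
Proof.
move=> a0 b0 nab; rewrite /row_free -addsmxE mxrank_disjoint_sum.
  by rewrite !rank_rV a0 b0.
apply/eqP; rewrite -submx0; apply: contraR nab => hc.
have r1 : \rank (a :&: b)%MS = 1%N.
  apply/eqP; rewrite eqn_leq lt0n mxrank_eq0 -submx0 hc andbT.
  by rewrite (leq_trans (mxrankS (capmxSl _ _))) // rank_leq_row.
have : (a <= a :&: b)%MS.
  by rewrite -(mxrank_leqif_sup (capmxSl _ _)) r1 rank_rV a0.
by move/submx_trans; apply; exact: capmxSr.
Qed.

Lemma pigeon (bad : nat -> 'rV[C]_n -> bool) :
  (forall w i j, i != j -> bad i w -> bad j w -> False) ->
  forall (L : seq 'rV[C]_n) (cs : seq nat), uniq cs -> (size L < size cs)%N ->
  exists2 i, i \in cs & forall w, w \in L -> ~~ bad i w.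
Proof.
move=> hb; elim=> [|w L IH] cs ucs hs.
  by case: cs ucs hs => // i cs _ _; exists i; rewrite ?inE ?eqxx.
case: (boolP (has (fun i => bad i w) cs)) => [/hasP[i ics bi]|].
  have u' : uniq (rem i cs) by apply: rem_uniq.
  have s' : (size L < size (rem i cs))%N by rewrite size_rem //; move: hs => /=; lia.
  have [k kin hk] := IH _ u' s'.
  have kcs : k \in cs by apply: (mem_rem kin).
  exists k => // w'; rewrite inE => /orP[/eqP ->|]; last exact: hk.
  apply/negP => bk.
  have kneq : k != i by move: kin; rewrite (rem_filter _ ucs) mem_filter => /andP[].
  exact: hb _ _ _ kneq bk bi.
move=> /hasPn hn.
have s' : (size L < size cs)%N by move: hs => /=; lia.
have [k kin hk] := IH _ ucs s'.
by exists k => // w'; rewrite inE => /orP[/eqP ->|]; [apply: hn | apply: hk].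
Qed.

Lemma avoid (K : 'M[C]_n) (L : seq 'rV[C]_n) : (1 < \rank K)%N ->
  exists v, [/\ (v <= K)%MS, v != 0 & forall w, w \in L -> ~~ (v <= w)%MS].
Proof.
move=> rK.
have : ~~ (K <= (0 : 'M_n))%MS by rewrite submx0 -mxrank_eq0 -lt0n (ltn_trans _ rK).
case/row_subPn => i; rewrite submx0 => x0.
set x := row i K in x0.
have : ~~ (K <= x)%MS.
  by apply: contraL rK => /mxrankS h; rewrite -leqNgt (leq_trans h) // rank_leq_row.
case/row_subPn => i'; set y := row i' K => nyx.
pose bad (k : nat) w := ((x + k%:R *: y)%R <= w)%MS.
have hb : forall w k l, k != l -> bad k w -> bad l w -> False.
  move=> w k l kl bk bl.
  have d : ((k%:R - l%:R) *: y <= w)%MS.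
    have -> : (k%:R - l%:R) *: y = (x + k%:R *: y) - (x + l%:R *: y).
      by rewrite scalerBl opprD addrACA subrr add0r.
    exact: (submxB bk bl).
  have kl0 : (k%:R - l%:R : C) != 0 by rewrite subr_eq0 eqr_nat.
  have yw : (y <= w)%MS.
    by rewrite -(scale1r y) -(mulVf kl0) -scalerA scalemx_sub.
  have xw : (x <= w)%MS.
    by rewrite -(addrK (k%:R *: y) x); apply: (submxB bk); rewrite scalemx_sub.
  have w0 : w != 0 by apply: contraNneq x0 => e; move: xw; rewrite e => /submx0null ->.
  have wx : (w <= x)%MS by apply: rV_sub_sym.
  by move: nyx; rewrite (submx_trans yw wx).
have := @pigeon bad hb (0 :: L) (iota 0 (size (0 :: L)).+1) (iota_uniq 0 _).
rewrite size_iota ltnSn => /(_ isT) [k _ hk].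
exists (x + k%:R *: y); split.
- by apply: addmx_sub; [exact: row_sub | apply: scalemx_sub; exact: row_sub].
- apply/negP => /eqP e; have := hk 0 (mem_head _ _); by rewrite /bad e sub0mx.
- by move=> w wL; apply: hk; rewrite inE wL orbT.
Qed.

Definition nzrow (K : 'M[C]_n) : 'rV[C]_n :=
  if [pick i | row i K != 0] is Some i then row i K else 0.

Lemma nzrowP K : K != 0 -> (nzrow K <= K)%MS /\ nzrow K != 0.
Proof.
move=> K0; rewrite /nzrow; case: pickP => [i hi|none]; first by split => //; exact: row_sub.
exfalso; have : K = 0.
  apply/row_matrixP => i; rewrite row0; apply/eqP; exact: negbFE (none i).
by move/eqP: K0.
Qed.

Lemma choose_nu (T : eqType) (Hs : seq T) (K : T -> 'M[C]_n) :
  (forall A, A \in Hs -> K A != 0) ->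
  (forall A B, A \in Hs -> B \in Hs -> A != B -> \rank (K A) = 1%N -> \rank (K B) = 1%N ->
     (K A :&: K B)%MS = 0) ->
  exists nu : T -> 'rV[C]_n,
    (forall A, A \in Hs -> (nu A <= K A)%MS /\ nu A != 0) /\
    (forall A B, A \in Hs -> B \in Hs -> A != B -> row_free (col_mx (nu A) (nu B))).
Proof.
move=> hK0 hcap.
suff : forall s : seq T, exists nu : T -> 'rV[C]_n,
    (forall A, A \in Hs -> (nu A <= K A)%MS /\ nu A != 0) /\
    (forall A B, A \in Hs -> B \in Hs -> A != B ->
      (A \in s) || (\rank (K A) == 1%N) -> (B \in s) || (\rank (K B) == 1%N) ->
      row_free (col_mx (nu A) (nu B))).
  move=> /(_ Hs) [nu [h1 h2]]; exists nu; split => // A B AH BH AB.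
  by apply: h2 => //; rewrite ?AH ?BH.
elim=> [|A0 s [nu [h1 h2]]].
  exists (fun A => nzrow (K A)); split => [A AH|A B AH BH AB]; first exact: nzrowP (hK0 _ AH).
  rewrite !in_nil /= => /eqP rA /eqP rB.
  have [sA nA] := nzrowP (hK0 _ AH); have [sB nB] := nzrowP (hK0 _ BH).
  apply: pair_free => //; apply/negP => ab.
  have : (nzrow (K A) <= K A :&: K B)%MS.
    by rewrite sub_capmx sA (submx_trans ab sB).
  by rewrite hcap // => /submx0null e; move: nA; rewrite e eqxx.
case: (boolP ((A0 \in Hs) && (\rank (K A0) != 1%N))) => [/andP[A0H rA0]|hA0].
  have rK : (1 < \rank (K A0))%N.
    by move: rA0 (hK0 _ A0H); rewrite -mxrank_eq0; case: (\rank _) => [|[]].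
  have [v [vK v0 vL]] := avoid [seq nu B | B <- Hs] rK.
  exists (fun A => if A == A0 then v else nu A); split.
    by move=> A AH; case: eqP => [->|_]; [split | apply: h1].
  move=> A B AH BH AB hA hB.
  have [_ nA'] := h1 _ AH; have [_ nB'] := h1 _ BH.
  case: ifP => [/eqP eA|/negbT nA]; case: ifP => [/eqP eB|/negbT nB].
  - by move: AB; rewrite eA eB eqxx.
  - by apply: pair_free => //; apply: vL; apply/mapP; exists B.
  - apply: pair_free => //; apply/negP => h.
    by move: (vL (nu A) (map_f _ AH)); rewrite (rV_sub_sym v0 nA' h).
  apply: h2 => //.
    by move: hA; rewrite inE (negbTE nA).
  by move: hB; rewrite inE (negbTE nB).
exists nu; split => // A B AH BH AB hA hB; apply: h2 => //.
  move: hA; rewrite inE; case: eqP => //= eA _; move: hA0; rewrite -eA AH /= negbK => ->.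
  by rewrite orbT.
move: hB; rewrite inE; case: eqP => //= eB _; move: hA0; rewrite -eB BH /= negbK => ->.
by rewrite orbT.
Qed.
End Choice.

Section Comb.
Variables (d n : nat) (H : {set {set 'I_d}}).
Implicit Types (S T I J A B C D : {set 'I_d}) (b : 'I_d).
Local Notation dep := (@qp_dependent d n H).
Local Notation indep := (@qp_independent d n H).

Lemma dep_mono S T : dep S -> S \subset T -> dep T.
Proof. move=> [U [sU cU]] sST; exists U; split => //; exact: subset_trans sST. Qed.

Lemma indep_mono S T : indep T -> S \subset T -> indep S.
Proof. by move=> iT sST dS; apply: iT; apply: dep_mono sST. Qed.

Lemma dep_hyper A S : A \in H -> S \subset A -> #|S| = n -> dep S.
Proof.
move=> AH sSA cS.
case: (classic (exists T : {set 'I_d}, T \subset S /\ qp_type1 n H T)) => [[T [sT t1]]|nt].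
  by exists T; split => //; left.
exists S; split => //; right; left; split => //; split => //; by exists A.
Qed.

Lemma dep_pair A B T : A \in H -> B \in H -> A != B -> T \subset A :&: B ->
  #|T| = (n - 1)%N -> dep T.
Proof.
move=> AH BH AB sT cT; exists T; split => //; left; split => //.
by exists A, B; split.
Qed.

Lemma n1_single : n = 1%N -> qp_has_rank n H n ->
  forall A B, A \in H -> B \in H -> A = B.
Proof.
move=> n1 [[S [iS _]] _] A B AH BH; apply/eqP; apply/negPn/negP => AB.
apply: iS; exists set0; split; first exact: sub0set.
left; split; first by rewrite cards0 n1.
by exists A, B; split => //; exact: sub0set.
Qed.

Lemma indep_add A B I J b : (0 < n)%N -> @triple_empty d H -> A \in H -> B \in H -> A != B ->
  I \subset A -> #|I| = (n - 1)%N -> indep I ->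
  J \subset B -> indep J -> b \in J -> b \notin A -> indep (b |: I).
Proof.
move=> n0 tri AH BH AB sIA cI iI sJB iJ bJ bA [T [sT cT]].
have bI : b \notin I by apply: contra bA; apply: (subsetP sIA).
have cbI : #|b |: I| = if n is 0 then 1%N else n.
  rewrite cardsU1 bI cI /=; case: (n) => [|k] //=; lia.
have cT_le : (#|T| <= #|b |: I|)%N by apply: subset_leq_card.
case: cT => [[c1 [C [D [CH DH CD sCD]]]]|[[c2 [[C [CH sC]] n1]]|[c3 _]]].
-
  case: (boolP (b \in T)) => bT; last first.
    apply: iI; exists T; split; last by left; split => //; exists C, D.
    apply/subsetP => x xT; have := subsetP sT x xT; rewrite !inE.
    by case/orP => // /eqP ex; move: bT; rewrite -ex xT.
  case: (set_0Vmem (T :\ b)) => [e0|[i iT]].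
    apply: iJ; exists T; split; last by left; split => //; exists C, D.
    apply/subsetP => x xT; case: (eqVneq x b) => [->//|xb].
    have : x \in T :\ b by rewrite !inE xb xT.
    by rewrite e0 inE.
  have iI' : i \in I.
    move: iT; rewrite !inE => /andP[ib iT']; have := subsetP sT i iT'.
    by rewrite !inE (negbTE ib).
  have iA : i \in A := subsetP sIA i iI'.
  have iCD : i \in C :&: D by apply: (subsetP sCD); move: iT; rewrite !inE => /andP[].
  have bCD : b \in C :&: D by apply: (subsetP sCD).
  have bB : b \in B := subsetP sJB b bJ.
  move: iCD bCD; rewrite !inE => /andP[iC iD] /andP[bC bD].
  have BCD : (B == C) || (B == D).
    apply/negPn/negP; rewrite negb_or => /andP[BC BD].
    have := tri B C D BH CH DH BC CD BD.
    by move/setP/(_ b); rewrite !inE bB bC bD.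
  have key : forall C' D', D' \in H -> C' != D' -> i \in C' -> i \in D' -> b \in D' ->
      B = C' -> False.
    move=> C' D' D'H CD' iC' iD' bD' eBC; subst C'.
    case: (eqVneq D' A) => [eDA|DA].
      by move: bA; rewrite -eDA bD'.
    have AD : A != D' by rewrite eq_sym.
    have := tri A B D' AH BH D'H AB CD' AD.
    by move/setP/(_ i); rewrite !inE iA iC' iD'.
  case/orP: BCD => /eqP e.
    exact: (key C D).
  by apply: (key D C); rewrite 1?eq_sym.
-
  have eT : T = b |: I.
    apply/eqP; rewrite eqEcard sT /= c2 cbI.
    by move: n0; case: (n).
  subst T.
  have bC : b \in C by apply: (subsetP sC); rewrite setU11.
  have CA : C != A by apply: contraNneq bA => <-.
  apply: iI; exists I; split => //; left; split => //.
  exists A, C; split => //; first by rewrite eq_sym.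
  apply/subsetP => x xI; rewrite inE (subsetP sIA x xI) /=.
  by apply: (subsetP sC); rewrite inE xI orbT.
-
  by move: cT_le n0; rewrite c3 cbI; case: (n) => [|k] /=; lia.
Qed.

End Comb.

Section Surj.
Variables (d n : nat) (H : {set {set 'I_d}}).
Implicit Types (G : 'M[C]_(n, d)) (S T I J A B : {set 'I_d}).

Lemma mem_hs j A : (A \in hs H j) = (A \in H) && (j \in A).
Proof. by rewrite /hs mem_filter mem_enum andbC. Qed.

Lemma uniq_hs j : uniq (hs H j).
Proof. by rewrite /hs filter_uniq // enum_uniq. Qed.

Lemma surj G (nu0 : {set 'I_d} -> 'rV[C]_n) :
  (forall A j, A \in H -> j \in A -> nu0 A *m col j G = 0) ->
  (forall A, A \in H -> nu0 A != 0) ->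
  (forall A B, A \in H -> B \in H -> A != B -> row_free (col_mx (nu0 A) (nu0 B))) ->
  exists t, GM H t = G.
Proof.
move=> horth hnz hfree.
pose hA j := head set0 (hs H j).
pose hB j := head set0 (behead (hs H j)).
pose N j : 'M[C]_(2, n) := col_mx (nu0 (hA j)) (nu0 (hB j)).
have exm : forall j, exists m : 'cV[C]_n,
    (nu0 (hA j) != 0) ==> (nu0 (hA j) *m m == 1%:M).
  move=> j; case: (boolP (nu0 (hA j) != 0)) => h; last by exists 0.
  have : row_free (nu0 (hA j)) by rewrite /row_free rank_rV h.
  by case/row_freeP => m hm; exists m; rewrite hm eqxx.
have exM : forall j, exists M : 'M[C]_(n, 2),
    row_free (N j) ==> (N j *m M == 1%:M).
  move=> j; case: (boolP (row_free (N j))) => h; last by exists 0.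
  by case/row_freeP: h => M hM; exists M; rewrite hM eqxx.
pose mj j := xchoose (exm j).
pose Mj j := xchoose (exM j).
pose t : PI d n -> C := fun k =>
  match k with
  | inl (inl (inl (A, i))) => nu0 A 0 i
  | inl (inl (inr (j, i))) => G i j
  | inl (inr (j, i)) => mj j i 0
  | inr (j, (i, k))  => Mj j i k
  end.
exists t.
have enu A : nu t A = nu0 A by apply/rowP => i; rewrite !mxE.
have eu j : uu t j = col j G by apply/colP => i; rewrite !mxE.
have em j : mm t j = mj j by apply/colP => i; rewrite !mxE.
have eM j : MM t j = Mj j by apply/matrixP => i k; rewrite !mxE.
apply/matrixP => i j; rewrite mxE.
suff -> : gam H t j = col j G by rewrite mxE.
rewrite /gam; case E: (hs H j) => [|A [|B l]].
- exact: eu.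
- have : A \in hs H j by rewrite E mem_head.
  rewrite mem_hs => /andP[AH jA].
  have hAj : hA j = A by rewrite /hA E.
  have := xchooseP (exm j); rewrite -/(mj j) hAj hnz //= => /eqP e1.
  rewrite /P1 enu eu em e1 horth // !mxE /= scale0r subr0 scale1r.
  done.
- have : A \in hs H j by rewrite E mem_head.
  rewrite mem_hs => /andP[AH jA].
  have : B \in hs H j by rewrite E !inE eqxx orbT.
  rewrite mem_hs => /andP[BH jB].
  have AB : A != B by have := uniq_hs j; rewrite E /= inE negb_or => /andP[/andP[]].
  have hAj : hA j = A by rewrite /hA E.
  have hBj : hB j = B by rewrite /hB E.
  have fr : row_free (N j) by rewrite /N hAj hBj; apply: hfree.
  have := xchooseP (exM j); rewrite -/(Mj j) fr /= => /eqP e1.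
  rewrite /N hAj hBj in e1.
  rewrite /P2 !enu eu eM e1 det1 scale1r.
  have z : (col_mx (nu0 A) (nu0 B) : 'M_(1 + 1, n)) *m col j G = 0.
    by rewrite mul_col_mx !horth // col_mx0.
  by rewrite z mulmx0 mulmx0 subr0.
Qed.


Definition Kmx G A : 'M[C]_n := kermx (Ysub G A)^T.

Lemma Kmx_col G A (v : 'rV[C]_n) j : (v <= Kmx G A)%MS -> j \in A -> v *m col j G = 0.
Proof.
move=> /sub_kermxP e jA; apply/colP => k; rewrite ord1.
have := congr1 (fun M : 'rV_#|A| => M 0 (enum_rank_in jA j)) e.
rewrite !mxE => e1; rewrite -[RHS]e1; apply: eq_bigr => i _; by rewrite !mxE enum_rankK_in.
Qed.

Lemma Kmx_intro G A p (v : 'M[C]_(p, n)) :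
  (forall j, j \in A -> v *m col j G = 0) -> (v <= Kmx G A)%MS.
Proof. by move=> h; apply/sub_kermxP; apply: Ysub_tr_mul. Qed.

Lemma rank_Kmx G A : \rank (Kmx G A) = (n - \rank (Ysub G A))%N.
Proof. by rewrite mxrank_ker mxrank_tr. Qed.

Definition QW G := forall I, @qp_dependent d n H I -> ~~ row_free (Ysub G I).
Definition QW' G := forall I, @qp_independent d n H I ->
  (forall j, j \in I -> exists T, j \in T /\ row_free (Ysub G T)) -> row_free (Ysub G I).

Lemma QW_indep G I : QW G -> row_free (Ysub G I) -> @qp_independent d n H I.
Proof. by move=> q fI dI; move: (q I dI); rewrite fI. Qed.

Lemma extract_rank G A : exists S, [/\ S \subset A, row_free (Ysub G S) &
  #|S| = \rank (Ysub G A)].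
Proof.
have [S [sSA fS hS]] := extract G A.
exists S; split => //.
rewrite -(eqP fS); apply/eqP; rewrite eqn_leq (mxrankS hS) andbT.
by apply: mxrankS; apply: Ysub_mono.
Qed.

Lemma F1 G A : QW G -> A \in H -> Kmx G A != 0.
Proof.
move=> q AH; rewrite -mxrank_eq0 rank_Kmx subn_eq0.
apply/negP => hr.
have [S [sSA fS cS]] := extract_rank G A.
have cSn : #|S| = n by apply/eqP; rewrite eqn_leq cS hr rank_leq_col.
by move: (q S (dep_hyper AH sSA cSn)); rewrite fS.
Qed.

Lemma F2 G A B : (0 < n)%N -> @triple_empty d H -> QW G -> QW' G ->
  A \in H -> B \in H -> A != B ->
  \rank (Kmx G A) = 1%N -> \rank (Kmx G B) = 1%N -> (Kmx G A :&: Kmx G B)%MS = 0.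
Proof.
move=> n0 tri q q' AH BH AB rA rB.
have rYA : \rank (Ysub G A) = (n - 1)%N.
  by move: rA; rewrite rank_Kmx; have := rank_leq_col (Ysub G A); lia.
have rYB : \rank (Ysub G B) = (n - 1)%N.
  by move: rB; rewrite rank_Kmx; have := rank_leq_col (Ysub G B); lia.
have [SA [sA fA cA]] := extract_rank G A.
have [SB [sB fB cB]] := extract_rank G B.
rewrite rYA in cA; rewrite rYB in cB.
have iA := QW_indep q fA; have iB := QW_indep q fB.
have : ~~ (SB \subset A).
  apply/negP => sBA; apply: iB; apply: (dep_pair AH BH AB) cB.
  by rewrite subsetI sBA sB.
case/subsetPn => b bSB bA.
have iI := indep_add n0 tri AH BH AB sA cA iA sB iB bSB bA.
have fI : row_free (Ysub G (b |: SA)).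
  apply: (q' _ iI) => j; rewrite !inE => /orP[/eqP ->|jA].
    by exists SB.
  by exists SA.
have bSA : b \notin SA by apply: contra bA; apply: (subsetP sA).
have cI : #|b |: SA| = n by rewrite cardsU1 bSA cA; move: n0; case: (n) => //= k _; lia.
apply/eqP; rewrite -submx0; apply/negP => /negP hc.
have : (Kmx G A :&: Kmx G B)%MS != 0 by rewrite -submx0.
case/rowV0Pn => v vc v0.
have vA : (v <= Kmx G A)%MS := submx_trans vc (capmxSl _ _).
have vB : (v <= Kmx G B)%MS := submx_trans vc (capmxSr _ _).
have hh : forall j, j \in b |: SA -> v *m col j G = 0.
  move=> j; rewrite !inE => /orP[/eqP ->|jS].
    apply: (Kmx_col vB); exact: (subsetP sB).
  apply: (Kmx_col vA); exact: (subsetP sA).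
have := rank_orth hh.
by rewrite (eqP fI) cI rank_rV v0 addn1 ltnn.
Qed.

Lemma weak_surj G : (0 < n)%N -> @triple_empty d H -> QW G -> QW' G ->
  exists t, GM H t = G.
Proof.
move=> n0 tri q q'.
case: (@choose_nu n _ (enum H) (Kmx G)) => [A|A B|nu0 [h1 h2]].
- by rewrite mem_enum => AH; apply: F1.
- by rewrite !mem_enum => AH BH AB rA rB; apply: F2.
apply: (@surj G nu0).
- move=> A j AH jA; have [h _] : (nu0 A <= Kmx G A)%MS /\ nu0 A != 0.
    by apply: h1; rewrite mem_enum.
  exact: Kmx_col h jA.
- by move=> A AH; have [_ h] : (nu0 A <= Kmx G A)%MS /\ nu0 A != 0 by apply: h1; rewrite mem_enum.
- by move=> A B AH BH AB; apply: h2; rewrite ?mem_enum.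
Qed.

End Surj.

Section EConf.
Variables (d n : nat) (H : {set {set 'I_d}}).
Implicit Types (G : 'M[C]_(n, d)) (S T I J A B : {set 'I_d}).
Local Notation dep := (@qp_dependent d n H).
Local Notation indep := (@qp_independent d n H).

Definition ES S : 'M[C]_(n, d) :=
  \matrix_(i, j) ((j \in S) && (i == index j (enum S) :> nat))%:R.

Lemma gr_ES_out S j : j \notin S -> gr (ES S) j = 0.
Proof. by move=> jS; apply/rowP => i; rewrite !mxE (negbTE jS). Qed.

Lemma index_enum_val S (l : 'I_#|S|) : index (enum_val l) (enum S) = l.
Proof.
by rewrite (enum_val_nth (enum_val l)) index_uniq ?enum_uniq // -cardE ltn_ord.
Qed.

Lemma ES_free S I : (#|S| <= n)%N -> I \subset S -> row_free (Ysub (ES S) I).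
Proof.
move=> Sn sIS; rewrite -kermx_eq0; apply/negPn/negP => /rowV0Pn [v /sub_kermxP vY /rV0Pn [l0 vl0]].
set j0 := enum_val l0.
have j0S : j0 \in S by apply: (subsetP sIS); apply: enum_valP.
have ki : (index j0 (enum S) < n)%N.
  by apply: leq_trans Sn; rewrite cardE index_mem mem_enum.
have := congr1 (fun M : 'rV_n => M 0 (Ordinal ki)) vY.
rewrite !mxE (bigD1 l0) //= big1 ?addr0.
  by rewrite !mxE j0S /= eqxx mulr1 => e; move: vl0; rewrite e eqxx.
move=> l ll0; rewrite !mxE /=.
have lS : enum_val l \in S by apply: (subsetP sIS); apply: enum_valP.
rewrite lS /=.
case: eqP => [e|]; last by rewrite mulr0.
exfalso; move/negP: ll0; apply; apply/eqP; apply: enum_val_inj.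
have : nth j0 (enum S) (index j0 (enum S)) =
       nth j0 (enum S) (index (enum_val l) (enum S)) by rewrite -e.
by rewrite !nth_index ?mem_enum.
Qed.

Lemma ES_QW S : indep S -> QW H (ES S).
Proof.
move=> iS I dI; case: (boolP (I \subset S)) => sIS.
  by exfalso; apply: iS; apply: dep_mono dI sIS.
case/subsetPn: sIS => j jI jS.
exact: gr_zero_not_free jI (gr_ES_out jS).
Qed.

Lemma ES_QW' S : (#|S| <= n)%N -> QW' H (ES S).
Proof.
move=> Sn I _ hI; apply: ES_free => //; apply/subsetP => j jI.
have [T [jT fT]] := hI j jI.
apply/negPn/negP => jS.
by move: fT; rewrite (negbTE (gr_zero_not_free jT (gr_ES_out jS))).
Qed.

Lemma Ysub_ES S : Ysub (ES S) S = pid_mx #|S|.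
Proof.
apply/matrixP => l i; rewrite !mxE enum_valP index_enum_val /= ltn_ord andbT.
by rewrite eq_sym.
Qed.

Lemma det_ES S : (#|S| <= n)%N -> \det (Ysub (ES S) S *m pid_mx #|S|) = 1.
Proof. by move=> Sn; rewrite Ysub_ES pid_mx_id // pid_mx_1 det1. Qed.

Lemma real_QW x : @qp_realization d n H x -> QW H (point_mx x).
Proof. by move=> r I dI; apply/cols_depP; apply/r. Qed.

Lemma real_QW' x : @qp_realization d n H x -> QW' H (point_mx x).
Proof.
move=> r I iI _; apply/negPn/negP => /cols_depP cd; apply: iI; exact/r.
Qed.

End EConf.

Lemma det_row_free (k m : nat) (M : 'M[C]_(k, m)) (P : 'M[C]_(m, k)) :
  \det (M *m P) != 0 -> row_free M.
Proof.
move=> h; have : row_free (M *m P) by rewrite row_free_unit unitmxE unitfE.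
rewrite /row_free => /eqP e; rewrite eqn_leq rank_leq_row /= -{1}e.
exact: mxrankM_maxl.
Qed.

Section Gen.
Variables (d n' : nat) (H : {set {set 'I_d}}).
Local Notation n := n'.+1.
Implicit Types (G : 'M[C]_(n, d)) (S T I J A B : {set 'I_d}).
Local Notation dep := (@qp_dependent d n H).
Local Notation indep := (@qp_independent d n H).

Hypothesis tri : @triple_empty d H.
Hypothesis hrank : @qp_has_rank d n H n.

Lemma size_hs j : (size (hs H j) <= 2)%N.
Proof.
case E: (hs H j) => [|A1 [|A2 [|A3 l]]] //.
have u := uniq_hs H j; rewrite E in u.
have m1 : A1 \in hs H j by rewrite E !inE eqxx.
have m2 : A2 \in hs H j by rewrite E !inE eqxx !orbT.
have m3 : A3 \in hs H j by rewrite E !inE eqxx !orbT.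
move: m1 m2 m3; rewrite !mem_hs => /andP[h1 j1] /andP[h2 j2] /andP[h3 j3].
move: u => /= /andP[]; rewrite !inE !negb_or => /and3P[n12 n13 _] /andP[/andP[n23 _] _].
have := tri h1 h2 h3 n12 n23 n13.
by move/setP/(_ j); rewrite !inE j1 j2 j3.
Qed.

Lemma orth_GM (t : PI d n -> C) A j : A \in H -> j \in A ->
  nu t A *m col j (GM H t) = 0.
Proof.
move=> AH jA.
have -> : col j (GM H t) = gam H t j by apply/colP => i; rewrite !mxE.
have mA : A \in hs H j by rewrite mem_hs AH jA.
have sz := size_hs j.
rewrite /gam; case E: (hs H j) sz mA => [|A1 [|A2 [|A3 l]]] // _.
  by rewrite inE => /eqP ->; exact: P1_orth.
have := P2_orth (col_mx (nu t A1) (nu t A2)) (MM t j) (uu t j).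
set g := P2 _ _ _ => e.
have e' : (col_mx (nu t A1) (nu t A2) : 'M_(1 + 1, n)) *m g = 0 by [].
move: e'; rewrite mul_col_mx => /eqP; rewrite col_mx_eq0 => /andP[/eqP e1 /eqP e2].
by rewrite !inE => /orP[] /eqP ->.
Qed.


Definition xv G : 'I_(n * d) -> C := fun k => mxvec G 0 k.

Lemma point_mx_xv G : point_mx (xv G) = G.
Proof.
rewrite /point_mx /xv; have -> : (\row_k mxvec G 0 k) = mxvec G by apply/rowP => k; rewrite mxE.
exact: mxvecK.
Qed.

Definition det2 (R : comRingType) (t : PI d n -> R) A B : R :=
  \det (col_mx (nu t A) (nu t B) *m (pid_mx 2 : 'M[R]_(n, 1 + 1))).

Definition minorS (R : comRingType) (t : PI d n -> R) S : R :=
  \det (Ysub (GM H t) S *m pid_mx #|S|).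

Definition cond (i : ({set 'I_d} * {set 'I_d}) + {set 'I_d}) (t : PI d n -> C) : C :=
  match i with
  | inl (A, B) => if (A \in H) && (B \in H) then
                    (if A == B then t (inl (inl (inl (A, ord0)))) else det2 t A B) else 1
  | inr S0 => if excluded_middle_informative (indep S0) then minorS t S0 else 1
  end.

Lemma cols_dep_mono G S T : cols_dependent G T -> T \subset S -> cols_dependent G S.
Proof.
move=> [c [[j [jT cj]] hs0]] sTS.
exists (fun x => if x \in T then c x else 0); split.
  by exists j; split; [exact: (subsetP sTS) | rewrite jT].
rewrite (bigID (fun x => x \in T)) /= [X in _ + X]big1 ?addr0; last first.
  by move=> x /andP[_ xT]; rewrite (negbTE xT) scale0r.
rewrite -[RHS]hs0; apply: eq_big => [x|x /andP[_ ->]//].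
by case: (boolP (x \in T)) => xT; rewrite ?andbT ?andbF // (subsetP sTS).
Qed.

Lemma gen_real t : (forall i, cond i t != 0) -> @qp_realization d n H (xv (GM H t)).
Proof.
move=> hc; set G := GM H t.
have nz : forall A, A \in H -> nu t A != 0.
  move=> A AH; have := hc (inl (A, A)); rewrite /= AH eqxx /=.
  by move=> h; apply/rV0Pn; exists ord0; rewrite mxE.
have pf : forall A B, A \in H -> B \in H -> A != B -> row_free (col_mx (nu t A) (nu t B)).
  move=> A B AH BH AB; have := hc (inl (A, B)); rewrite /= AH BH (negbTE AB) /=.
  exact: det_row_free.
move=> S; rewrite point_mx_xv; split.
  move=> [T [sTS cT]]; apply: cols_dep_mono sTS; apply/cols_depP.
  case: cT => [[c1 [A [B [AH BH AB sAB]]]]|[[c2 [[A [AH sA]] _]]|[c3 _]]].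
  - have n2 : (1 < n)%N.
      apply: contraTT AB; rewrite -leqNgt ltnS leqn0 => /eqP e.
      by apply/negPn/eqP; apply: (n1_single _ hrank AH BH); rewrite e.
    have hK : forall j, j \in T -> (col_mx (nu t A) (nu t B) : 'M_(1 + 1, _)) *m col j G = 0.
      move=> j jT; have := subsetP sAB j jT; rewrite inE => /andP[jA jB].
      by rewrite mul_col_mx !orth_GM // col_mx0.
    have := rank_orth hK; rewrite (eqP (pf _ _ AH BH AB)) /row_free.
    move: (\rank (Ysub G T)) => r; rewrite c1 => h; apply/negP => /eqP e.
    by move: h n2; rewrite e; lia.
  - have hK : forall j, j \in T -> nu t A *m col j G = 0.
      by move=> j jT; apply: orth_GM => //; exact: (subsetP sA).
    have := rank_orth hK; rewrite rank_rV nz // /row_free.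
    move: (\rank (Ysub G T)) => r; rewrite c2 => h; apply/negP => /eqP e.
    by move: h; rewrite e; lia.
  - apply/negP => /eqP e; have := rank_leq_col (Ysub G T).
    by rewrite e c3 ltnn.
move=> cd; apply: NNPP => iS.
have := hc (inr S); rewrite /=; case: excluded_middle_informative => [p h|ni]; last by exfalso; apply: ni.
by move/cols_depP: cd; rewrite (det_row_free h).
Qed.

End Gen.

Lemma lift_polyfun (PT : Type) (Phi : (PT -> C) -> C) (Phip : (PT -> {poly C}) -> {poly C}) :
  (forall t z, (Phip t).[z] = Phi (fun k => (t k).[z])) -> polyfun Phi.
Proof.
move=> h a b; exists (Phip (fun k => (a k)%:P + (b k)%:P * 'X)) => z.
rewrite h; congr Phi; apply: functional_extensionality => k.
by rewrite hornerD hornerC hornerM hornerC hornerX mulrC.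
Qed.

Lemma horner_mmap m (p : {mpoly C[m]}) (h : 'I_m -> {poly C}) z :
  (mmap polyC h p).[z] = p.@[fun k => (h k).[z]].
Proof.
rewrite /meval /mmap -horner_evalE rmorph_sum /=; apply: eq_bigr => mm _.
rewrite rmorphM /= horner_evalE hornerC /mmap1 rmorph_prod; congr (_ * _).
by apply: eq_bigr => i _; rewrite rmorphXn /= horner_evalE.
Qed.

Section Final.
Variables (d n' : nat) (H : {set {set 'I_d}}).
Local Notation n := n'.+1.

Lemma horner_comp (t : PI d n -> {poly C}) z :
  (fun k => (t k).[z]) = horner_eval z \o t.
Proof. by apply: functional_extensionality => k; rewrite /= horner_evalE. Qed.

Lemma map_nu (R S : comRingType) (g : {rmorphism R -> S}) (t : PI d n -> R) A :
  map_mx g (nu t A) = nu (g \o t) A.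
Proof. by apply/rowP => i; rewrite !mxE. Qed.

Lemma map_Ysub (R S : comRingType) (g : {rmorphism R -> S}) (G : 'M[R]_(n, d)) T :
  map_mx g (Ysub G T) = Ysub (map_mx g G) T.
Proof. by apply/matrixP => i j; rewrite !mxE. Qed.

Lemma polyfun_coord k : polyfun (fun t : PI d n -> C => t k).
Proof. by apply: (@lift_polyfun _ _ (fun t => t k)) => t z. Qed.

Lemma polyfun_det2 A B : polyfun (fun t : PI d n -> C => det2 t A B).
Proof.
apply: (@lift_polyfun _ _ (fun t => det2 t A B)) => t z.
rewrite horner_comp -horner_evalE /det2 -det_map_mx map_mxM map_col_mx !map_nu.
by rewrite map_pid_mx.
Qed.

Lemma polyfun_minor S : polyfun (fun t : PI d n -> C => minorS H t S).
Proof.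
apply: (@lift_polyfun _ _ (fun t => minorS H t S)) => t z.
rewrite horner_comp -horner_evalE /minorS -det_map_mx map_mxM map_Ysub map_GM.
by rewrite map_pid_mx.
Qed.

Lemma polyfun_eval (p : {mpoly C[n * d]}) :
  polyfun (fun t : PI d n -> C => p.@[xv (GM H t)]).
Proof.
apply: (@lift_polyfun _ _ (fun t => mmap polyC (fun k => mxvec (GM H t) 0 k) p)) => t z.
rewrite horner_mmap; congr meval; apply: functional_extensionality => k.
by rewrite /xv horner_comp -map_GM -map_mxvec mxE /= horner_evalE.
Qed.

Lemma polyfun_cond i : polyfun (@cond d n' H i).
Proof.
case: i => [[A B]|S] /=.
  rewrite /cond; case: ((A \in H) && (B \in H)); last exact: polyfun1.
  case: (A == B); [exact: polyfun_coord | exact: polyfun_det2].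
rewrite /cond; case: excluded_middle_informative => p; [exact: polyfun_minor | exact: polyfun1].
Qed.


Lemma xv_point (y : 'I_(n * d) -> C) : xv (point_mx y) = y.
Proof.
apply: functional_extensionality => k.
by rewrite /xv /point_mx vec_mxK mxE.
Qed.

Lemma real_param (tri : @triple_empty d H) (y : 'I_(n * d) -> C) :
  @qp_realization d n H y -> exists t, xv (GM H t) = y.
Proof.
move=> r; have [t ht] := weak_surj (ltn0Sn n') tri (real_QW r) (real_QW' r).
by exists t; rewrite ht xv_point.
Qed.

Lemma cond_witness (tri : @triple_empty d H) (hr : @qp_has_rank d n H n) i :
  exists t, @cond d n' H i t != 0.
Proof.
case: i => [[A B]|S]; rewrite /cond.
  case: (boolP ((A \in H) && (B \in H))) => [/andP[AH BH]|_]; last first.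
    by exists (fun _ => 0); rewrite oner_neq0.
  case: (eqVneq A B) => [eAB|AB].
    by exists (fun _ => 1); rewrite oner_neq0.
  have n2 : (2 <= n)%N.
    apply: contraTT AB; rewrite -leqNgt ltnS leqn0 => /eqP e.
    by apply/negPn/eqP; apply: (n1_single _ hr AH BH); rewrite e.
  pose t0 : PI d n -> C := fun k => match k with
    | inl (inl (inl (C0, i))) => if C0 == A then (i == 0 :> nat)%:R else (i == 1 :> nat)%:R
    | _ => 0 end.
  exists t0; rewrite /det2.
  have -> : col_mx (nu t0 A) (nu t0 B) = pid_mx 2 :> 'M_(1 + 1, n).
    apply/matrixP => r c; rewrite !mxE; case: splitP => r' er; rewrite !mxE /=.
      by rewrite eqxx er (ord1 r') /=; congr (_%:R); case: (nat_of_ord c).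
    have BA : (B == A) = false by apply/negbTE; rewrite eq_sym.
    by rewrite BA er (ord1 r') /=; congr (_%:R); case: (nat_of_ord c) => [|[]].
  by rewrite pid_mx_id // pid_mx_1 det1 oner_neq0.
case: excluded_middle_informative => p; last by exists (fun _ => 0); rewrite oner_neq0.
have Sn : (#|S| <= n)%N by case: hr => _ h; apply: h.
have [t ht] := weak_surj (ltn0Sn n') tri (ES_QW p) (ES_QW' Sn).
by exists t; rewrite /minorS ht det_ES // oner_neq0.
Qed.

End Final.

Theorem corollary3p9 (d n : nat) (H : {set {set 'I_d}}) :
  (0 < n)%N -> (n <= d)%N -> @triple_empty d H -> @qp_has_rank d n H n ->
  (exists x, @qp_realization d n H x) /\
  zariski_irreducible (zariski_closure (@qp_realization d n H)).
Proof.
case: n => [//|n'] _ _ tri hr.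
have hp := @polyfun_cond d n' H.
have hw := cond_witness tri hr.
have incl : forall x, @qp_realization d n'.+1 H x ->
    zariski_closure (@qp_realization d n'.+1 H) x.
  by move=> x rx p hp0; apply: hp0.
have [t ht] := polyfun_common (fun _ => 0) hp hw.
have r0 := gen_real tri hr ht.
split; first by exists (xv (GM H t)).
split; first by exists (xv (GM H t)); apply: incl.
move=> Z1 Z2 [P1 hZ1] [P2 hZ2] cover.
apply: NNPP => /not_or_and [n1 n2].
have [x1 hx1] := not_all_ex_not _ _ n1.
have [c1 nz1] := imply_to_and _ _ hx1.
have [x2 hx2] := not_all_ex_not _ _ n2.
have [c2 nz2] := imply_to_and _ _ hx2.
have : ~ zero_locus P1 x1 by move=> h; apply: nz1; apply/hZ1.
move/not_all_ex_not => [p1 hp1]; have [p1P p1x] := imply_to_and _ _ hp1.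
have : ~ zero_locus P2 x2 by move=> h; apply: nz2; apply/hZ2.
move/not_all_ex_not => [p2 hp2]; have [p2P p2x] := imply_to_and _ _ hp2.
have : ~ vanishing_ideal (@qp_realization d n'.+1 H) p1 by move=> h; apply: p1x; apply: c1.
move/not_all_ex_not => [y1 hy1]; have [ry1 py1] := imply_to_and _ _ hy1.
have : ~ vanishing_ideal (@qp_realization d n'.+1 H) p2 by move=> h; apply: p2x; apply: c2.
move/not_all_ex_not => [y2 hy2]; have [ry2 py2] := imply_to_and _ _ hy2.
have [t1 et1] := real_param tri ry1.
have [t2 et2] := real_param tri ry2.
pose phi (o : option (option ((({set 'I_d} * {set 'I_d}) + {set 'I_d})%type))) :=
  match o with
  | None => fun t => p1.@[xv (GM H t)]
  | Some None => fun t => p2.@[xv (GM H t)]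
  | Some (Some i) => @cond d n' H i
  end.
case: (@polyfun_common _ _ phi (fun _ => 0)) => [o|o|s hs].
- case: o => [[i|]|] /=; [exact: hp | exact: polyfun_eval | exact: polyfun_eval].
- case: o => [[i|]|] /=; [exact: hw | by exists t2; rewrite et2; apply/eqP | by exists t1; rewrite et1; apply/eqP].
have rs := gen_real tri hr (fun i => hs (Some (Some i))).
case: (cover _ (incl _ rs)) => [/hZ1 h1|/hZ2 h2].
  by move: (hs None); rewrite /= (h1 _ p1P) eqxx.
by move: (hs (Some None)); rewrite /= (h2 _ p2P) eqxx.
Qed.
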